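(* Let $T$ be a square-integrable real random variable and $X=(X_s)_{s\in\mathbb{S}}$ a finite family of random variables (features), and let $f$ be a measurable function with $f(X)=E[T\mid X]$ almost surely. For $S\subseteq\mathbb{S}$ write $X_S=(X_s)_{s\in S}$ and define, for a realisation $(x,t)$ of $(X,T)$, the value function $w_{f(x),t}(S)=\bigl(t-v_{f(x)}(S)\bigr)^2$, where $v_{f(x)}(S)=E[f(X)\mid X_s=x_s,\ s\in S]$, and set $\varphi_j(f,x,t,S)=w_{f(x),t}(S\cup\{j\})-w_{f(x),t}(S)$. Let $\pi$ be a permutation of $\mathbb{S}$, let $j\in\mathbb{S}$ and $R_j=\{i:\pi(i)<\pi(j)\}$. Then $$-E\bigl[\varphi_j(f,X,T,R_j)\bigr]=L_T(X_j)+W_T(X_j;X_{R_j}),$$ where for families of random variables $A,B$: $L_T(A)=\sigma^2(T)-\sigma^2\bigl(T-E[T\mid A]\bigr)$ and $W_T(A;B)=L_T(A,B)-L_T(A)-L_T(B)$ (with $L_T$ of the empty family equal to $0$).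
   Context: $\sigma^2$ denotes variance. $L_T(A,B)$ means $L_T$ applied to the combined family of variables $A$ and $B$. The paper's analysis assumes the model equals (approximately) the conditional expectation of the target, $f(X)\approx E[T\mid X]$, as obtained from mean-squared-error regression. *)

(* Defs.v *)
From HB Require Import structures.
From mathcomp Require Import all_boot all_order all_algebra.
From mathcomp Require Import all_classical all_reals all_analysis.
Set Implicit Arguments. Unset Strict Implicit. Unset Printing Implicit Defensive.
Import Order.TTheory GRing.Theory Num.Theory.
Local Open Scope classical_set_scope.
Local Open Scope ring_scope.

Section Defs.
Context (d : measure_display) (Omega : measurableType d) (R : realType)
        (P : probability Omega R).

Definition expect (Y : Omega -> R) : R := fine (\int[P]_x (Y x)%:E)%E.

Definition variance (Y : Omega -> R) : R :=
  expect (fun x => (Y x - expect Y) ^+ 2).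

Definition measurable_wrt (G : set (set Omega)) (Z : Omega -> R) : Prop :=
  forall B : set R, measurable B -> G (Z @^-1` B).

Definition is_condexp (G : set (set Omega)) (Y Z : Omega -> R) : Prop :=
  [/\ measurable_wrt G Z,
      P.-integrable setT (fun x => (Z x)%:E) &
      forall A, G A -> (\int[P]_(x in A) (Z x)%:E = \int[P]_(x in A) (Y x)%:E)%E].

Definition sigmaX (n : nat) (dX : 'I_n -> measure_display)
  (Xsp : forall i, measurableType (dX i)) (X : forall i, Omega -> Xsp i)
  (S : {set 'I_n}) : set (set Omega) :=
  <<s [set A | exists s, s \in S /\
        exists B : set (Xsp s), measurable B /\ A = X s @^-1` B] >>.

Definition LT (T CA : Omega -> R) : R :=
  variance T - variance (fun x => T x - CA x).

End Defs.

(* Main.v *)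
Require Import Defs.
From HB Require Import structures.
From mathcomp Require Import all_boot all_order all_algebra.
From mathcomp Require Import fingroup perm.
From mathcomp Require Import all_classical all_reals all_analysis.
From mathcomp Require Import measurable_realfun lebesgue_integral.
From mathcomp Require Import ring lra.
Import Order.TTheory GRing.Theory Num.Theory.
Local Open Scope classical_set_scope.
Local Open Scope ring_scope.
Section CE.
Context d (Om : measurableType d) (R : realType) (P : probability Om R).
Variable Gen : set (set Om).
Hypothesis GenM : Gen `<=` measurable.
Local Notation G := (<<s Gen>>).
Local Notation Om' := (g_sigma_algebraType Gen).

Lemma G_meas : G `<=` measurable.
Proof. apply: smallest_sub GenM; exact: sigma_algebra_measurable. Qed.

Lemma wrt_mfun (Z : Om -> R) : measurable_wrt G Z ->
  measurable_fun (setT : set Om') (Z : Om' -> R).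
Proof. by move=> hZ _ B mB; rewrite setTI; exact: hZ. Qed.

Lemma mfun_G (Z : Om -> R) B : measurable_fun (setT : set Om') (Z : Om' -> R) ->
  measurable B -> G (Z @^-1` B).
Proof. by move=> mZ mB; have := mZ (@measurableT _ Om') B mB; rewrite setTI. Qed.

Lemma GT : G setT.
Proof. exact: (@measurableT _ Om'). Qed.

Lemma intZ (D : set Om) (f : Om -> R) k : measurable D ->
  P.-integrable D (EFin \o f) -> P.-integrable D (EFin \o (fun x => k * f x)).
Proof.
move=> mD h; apply: (eq_integrable (mu:=P) mD (fun x => k%:E * (EFin \o f) x)%E).
  by move=> x _ /=; rewrite EFinM.
exact: integrableZl.
Qed.

Variables (T C : Om -> R).
Hypothesis mT : measurable_fun setT T.
Hypothesis iT2 : P.-integrable setT (fun x => (T x ^+ 2)%:E).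
Hypothesis hC : is_condexp P G T C.

Lemma iT : P.-integrable setT (EFin \o T).
Proof.
apply: (@le_integrable _ _ _ P _ measurableT _ (fun x => (1 + T x ^+ 2)%:E)) => //.
- exact: measurableT_comp.
- move=> x _ /=; rewrite lee_fin [X in _ <= X]ger0_norm;
    last by rewrite addr_ge0// sqr_ge0.
  have := real_normK (num_real (T x)); nra.
- under eq_fun do rewrite EFinD.
  apply: integrableD => //; exact: finite_measure_integrable_cst.
Qed.


Lemma iC : P.-integrable setT (EFin \o C).
Proof. by case: hC. Qed.

Lemma mC : measurable_fun setT C.
Proof. by have /measurable_int/measurable_EFinP := iC. Qed.

Lemma hCT A : G A -> \int[P]_(x in A) C x = \int[P]_(x in A) T x.
Proof. by case: hC => _ _ h GA; rewrite /Rintegral h. Qed.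

Lemma intS {f : Om -> \bar R} {A} : measurable A -> P.-integrable setT f -> P.-integrable A f.
Proof. by move=> mA; apply: integrableS. Qed.

Lemma set_bound (s a : R) (A : set Om) : s ^+ 2 = 1 -> 0 <= a -> G A ->
  (forall x, A x -> a <= s * C x) ->
  a ^+ 2 * fine (P A) <= \int[P]_(x in A) (T x ^+ 2).
Proof.
move=> s2 a0 GA hA.
have mA : measurable A by exact: G_meas.
have iTA := intS mA iT.
have iCA := intS mA iC.
have iT2A := intS mA iT2.
have icA c := finite_measure_integrable_cst P c mA.
have h1 : a * fine (P A) <= s * \int[P]_(x in A) T x.
  rewrite -hCT // -RintegralZl // -Rintegral_cst //.
  by apply: le_Rintegral => //; [exact: icA | exact: intZ].
have h3 : \int[P]_(x in A) (2 * a * s * T x) <= \int[P]_(x in A) (T x ^+ 2 + a ^+ 2).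
  apply: le_Rintegral => //.
  - exact: intZ.
  - apply: (eq_integrable (mu:=P) mA (fun x => ((T x ^+ 2)%R)%:E + (EFin \o cst (a ^+ 2)%R) x)%E) => //.
    exact: integrableD.
  - move=> x _; have := sqr_ge0 (T x - a * s).
    have -> : (T x - a * s) ^+ 2 = T x ^+ 2 - 2 * a * s * T x + a ^+ 2 * s ^+ 2 by ring.
    rewrite s2; lra.
rewrite RintegralZl // RintegralD // in h3. rewrite (Rintegral_cst P mA) in h3.
have p0 : 0 <= fine (P A) by apply: fine_ge0.
nra. exact: icA.
Qed.


Lemma mC' : measurable_fun (setT : set Om') (C : Om' -> R).
Proof. by case: hC => h _ _; exact: wrt_mfun. Qed.

Definition Ak (s : R) (k : nat) : set Om :=
  [set x | (k.+1%:R <= s * C x) && (s * C x < k.+2%:R)].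

Lemma GAk s k : G (Ak s k).
Proof.
have -> : Ak s k = (fun x => s * C x) @^-1` `[k.+1%:R, k.+2%:R[.
  by apply/seteqP; split => x /=; rewrite in_itv.
apply: mfun_G; last exact: measurable_itv.
exact: measurable_funM (measurable_cst _) mC'.
Qed.

Lemma mAk s k : measurable (Ak s k).
Proof. by apply: G_meas; exact: GAk. Qed.

Lemma mC2 (A : set Om) : measurable A ->
  measurable_fun A (fun x => ((C x ^+ 2)%R)%:E).
Proof.
move=> mA; apply/measurable_EFinP; apply: measurable_funX.
exact: measurable_funS (subsetT _) mC.
Qed.

Lemma k_bound s k : s ^+ 2 = 1 ->
  (\int[P]_(x in Ak s k) ((C x ^+ 2)%R)%:E <=
   4%:E * \int[P]_(x in Ak s k) ((T x ^+ 2)%R)%:E)%E.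
Proof.
move=> s2; have GA := GAk s k; have mA := mAk s k.
have hb := @set_bound s k.+1%:R (Ak s k) s2 (ler0n _ _) GA
  (fun x Ax => (andP Ax).1).
have e1 : (k.+1%:R : R) = k%:R + 1 by rewrite -natr1.
have e2 : (k.+2%:R : R) = k%:R + 2 by rewrite -natr1 e1; ring.
apply: (@le_trans _ _ (\int[P]_(x in Ak s k) (cst ((((k.+2%:R : R) ^+ 2)%R)%:E) x))%E).
  apply: (ge0_le_integral P mA).
  - by move=> x _; rewrite lee_fin sqr_ge0.
  - exact: mC2.
  - exact: measurable_cst.
  - move=> x; rewrite /Ak /= => /andP[h1 h2]; rewrite lee_fin.
    have -> : C x ^+ 2 = (s * C x) ^+ 2 by rewrite exprMn s2 mul1r.
    rewrite e1 e2 in h1 h2 *.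
    have k0 : (0 : R) <= k%:R by [].
    nra.
rewrite integral_cst //.
rewrite -[X in (_ * X <= _)%E]fineK; last by apply: fin_num_measure.
rewrite -(fineK (integrable_fin_num mA (intS mA iT2))) -!EFinM lee_fin.
have p0 : 0 <= fine (P (Ak s k)) by apply: fine_ge0.
rewrite e1 in hb; rewrite e2.
have k0 : (0 : R) <= k%:R by [].
rewrite /Rintegral in hb.
nra.
Qed.


Definition U (s : R) := \bigcup_k Ak s k.

Lemma mU s : measurable (U s).
Proof. by apply: bigcupT_measurable => k; exact: mAk. Qed.

Lemma trivAk s : trivIset setT (Ak s).
Proof.
move=> i j _ _ [x []]; rewrite /Ak /= => /andP[h1 h2] /andP[h3 h4].
have a1 : (j.+1%:R : R) < i.+2%:R by apply: le_lt_trans h3 h2.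
have a2 : (i.+1%:R : R) < j.+2%:R by apply: le_lt_trans h1 h4.
rewrite ltr_nat in a1; rewrite ltr_nat in a2.
rewrite !ltnS in a1 a2; by apply/eqP; rewrite eqn_leq a1 a2.
Qed.

Lemma U_bound s : s ^+ 2 = 1 ->
  (\int[P]_(x in U s) ((C x ^+ 2)%R)%:E <=
   4%:E * \int[P]_x ((T x ^+ 2)%R)%:E)%E.
Proof.
move=> s2.
have mT2 : measurable_fun setT (fun x => ((T x ^+ 2)%R)%:E).
  by apply/measurable_EFinP; apply: measurable_funX.
rewrite /U ge0_integral_bigcup //; last 4 first.
- exact: mAk.
- exact: mC2 (mU s).
- by move=> x _; rewrite lee_fin sqr_ge0.
- exact: trivAk.
apply: (@le_trans _ _ (\sum_(k <oo) (4%:E * \int[P]_(x in Ak s k) ((T x ^+ 2)%R)%:E))%E).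
  apply: lee_nneseries.
  - by move=> k _ _; apply: integral_ge0 => x _; rewrite lee_fin sqr_ge0.
  - by move=> k _; exact: k_bound.
rewrite nneseriesZl; last by move=> k _; apply: integral_ge0 => x _; rewrite lee_fin sqr_ge0.
rewrite -ge0_integral_bigcup //; last 4 first.
- exact: mAk.
- exact: measurable_funS mT2.
- by move=> x _; rewrite lee_fin sqr_ge0.
- exact: trivAk.
apply: lee_wpmul2l => //.
apply: ge0_subset_integral => //.
- exact: mU.
- by move=> x _; rewrite lee_fin sqr_ge0.
Qed.


Lemma inU s x : 1 <= s * C x -> U s x.
Proof.
move=> h; set y := s * C x.
have y0 : 0 <= y by apply: le_trans h.
have := truncn_itv y0 => /andP[t1 t2].
have hm : (0 < Num.truncn y)%N by rewrite truncn_gt_nat.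
exists (Num.truncn y).-1 => //; rewrite /Ak /= prednK //.
by rewrite t1 t2.
Qed.

Lemma T2fin : (\int[P]_x ((T x ^+ 2)%R)%:E < +oo)%E.
Proof.
have [_ h] := integrableP _ _ _ iT2.
apply: le_lt_trans h; apply: ge0_le_integral => //.
- by move=> x _; rewrite lee_fin sqr_ge0.
- by apply/measurable_EFinP; apply: measurable_funX.
- by apply: measurableT_comp => //; apply/measurable_EFinP; apply: measurable_funX.
- by move=> x _; exact: lee_abs.
Qed.

Lemma iC2 : P.-integrable setT (fun x => ((C x ^+ 2)%R)%:E).
Proof.
apply/integrableP; split; first exact: mC2 measurableT.
pose f s := ((fun x => ((C x ^+ 2)%R)%:E) \_ (U s)).
have mf s : measurable_fun setT (f s).
  by apply/(measurable_restrictT _ (mU s)); exact: mC2 (mU s).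
have f0 s x : (0 <= f s x)%E.
  by rewrite /f patchE; case: ifPn => _ //; rewrite lee_fin sqr_ge0.
apply: (@le_lt_trans _ _ (\int[P]_x ((f 1%R x + f (-1)%R x + 1%:E)%E))%E).
  apply: ge0_le_integral => //.
  - by apply: measurableT_comp => //; exact: mC2.
  - apply: emeasurable_funD; first exact: emeasurable_funD.
    exact: measurable_cst.
  - move=> x _; rewrite gee0_abs ?lee_fin ?sqr_ge0 // /f !patchE.
    case: ifPn => h1; case: ifPn => h2.
    + by rewrite -!EFinD lee_fin; have := sqr_ge0 (C x); lra.
    + by rewrite adde0 -!EFinD lee_fin; lra.
    + by rewrite add0e -!EFinD lee_fin; lra.
    + rewrite !add0e lee_fin.
      have a1 : ~ (1 <= 1 * C x) by move=> /inU hx; move: h1; rewrite notin_setE; apply.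
      have a2 : ~ (1 <= -1 * C x) by move=> /inU hx; move: h2; rewrite notin_setE; apply.
      rewrite mul1r in a1; rewrite mulN1r in a2.
      move/negP: a1; rewrite -ltNge => a1.
      move/negP: a2; rewrite -ltNge => a2.
      nra.
rewrite ge0_integralD //; try by [move=> x _; rewrite adde_ge0 | exact: emeasurable_funD | exact: measurable_cst].
rewrite ge0_integralD // -!integral_mkcond.
have h4 : (4%:E * \int[P]_x ((T x ^+ 2)%R)%:E < +oo)%E.
  by apply: lte_mul_pinfty => //; exact: T2fin.
apply: lte_add_pinfty; last first.
  rewrite integral_cst // mul1e -ge0_fin_numE //; exact: fin_num_measure.
apply: lte_add_pinfty.
- by apply: le_lt_trans h4; apply: U_bound; rewrite expr1n.
- by apply: le_lt_trans h4; apply: U_bound; rewrite sqrrN expr1n.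
Qed.


Lemma condexp_ae (T0 U1 U2 : Om -> R) : P.-integrable setT (EFin \o T0) ->
  is_condexp P G T0 U1 -> is_condexp P G T0 U2 -> {ae P, forall x, U1 x = U2 x}.
Proof.
move=> iT0 [w1 i1 h1] [w2 i2 h2].
have m1 := @wrt_mfun U1 w1; have m2 := @wrt_mfun U2 w2.
have key s : {ae P, forall x, ~ (0 < s * (U1 x - U2 x))}.
  pose A := [set x | 0 < s * (U1 x - U2 x)].
  have GA : G A.
    have -> : A = (fun x => s * (U1 x - U2 x)) @^-1` `]0, +oo[.
      by apply/seteqP; split => x /=; rewrite in_itv /= andbT.
    apply: mfun_G; last exact: measurable_itv.
    exact: measurable_funM (measurable_cst _) (measurable_funB m1 m2).
  have mA : measurable A by exact: G_meas.
  have i1A := intS mA i1; have i2A := intS mA i2.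
  pose g := fun x => s * (U1 x - U2 x).
  have iB : P.-integrable A (EFin \o (fun x => U1 x - U2 x)).
    apply: (eq_integrable (mu:=P) mA ((EFin \o U1) \- (EFin \o U2))%E) => //.
    exact: integrableB.
  have iD : P.-integrable A (EFin \o g) by apply: intZ.
  have mD : measurable_fun A (EFin \o g) by exact: measurable_int iD.
  have : (\int[P]_(x in A) `|(EFin \o g) x| = 0)%E.
    transitivity (\int[P]_(x in A) (EFin \o g) x)%E.
      apply: eq_integral => x; rewrite inE => Ax.
      by rewrite gee0_abs // lee_fin ltW.
    rewrite -(fineK (integrable_fin_num mA iD)).
    rewrite -[fine _]/(\int[P]_(x in A) (s * (U1 x - U2 x))).
    rewrite RintegralZl // RintegralB // /Rintegral h1 // h2 //.
    by rewrite subrr mulr0.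
  move/(ae_eq_integral_abs P mA mD) => hae.
  apply: filterS hae => x H Ax.
  by have := H Ax => /= /eqP; rewrite eqe => /eqP h; move: Ax; rewrite /A /= -/(g x) h ltxx.
apply: filterS2 (key 1) (key (-1)) => x a b.
rewrite mul1r in a; rewrite mulN1r in b.
move/negP: a; rewrite -leNgt => a.
move/negP: b; rewrite -leNgt => b.
lra.
Qed.


Lemma iTC2 : P.-integrable setT (EFin \o (fun x => (T x - C x) ^+ 2)).
Proof.
have i1 : P.-integrable setT (EFin \o (fun x => 2 * T x ^+ 2)) by apply: intZ.
have i2 : P.-integrable setT (EFin \o (fun x => 2 * C x ^+ 2)) by apply: intZ => //; exact: iC2.
have i12 : P.-integrable setT (EFin \o (fun x => 2 * T x ^+ 2 + 2 * C x ^+ 2)).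
  apply: (eq_integrable (mu:=P) measurableT ((EFin \o (fun x => (2 * T x ^+ 2)%R)) \+ (EFin \o (fun x => (2 * C x ^+ 2)%R)))%E) => //.
  exact: integrableD.
apply: (@le_integrable _ _ _ P _ measurableT _ _ _ _ i12).
- apply/measurable_EFinP; apply: measurable_funX; exact: measurable_funB mT mC.
- move=> x _ /=; rewrite !ger0_norm ?lee_fin ?sqr_ge0 //; last first.
    by rewrite addr_ge0 // mulr_ge0 // sqr_ge0.
  have := sqr_ge0 (T x + C x).
  have -> : (T x - C x) ^+ 2 = T x ^+ 2 + C x ^+ 2 - 2 * T x * C x by ring.
  have -> : (T x + C x) ^+ 2 = T x ^+ 2 + C x ^+ 2 + 2 * T x * C x by ring.
  lra.
Qed.

Lemma var_eq : Defs.variance P (fun x => T x - C x) = expect P (fun x => (T x - C x) ^+ 2).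
Proof.
have E0 : expect P (fun x => T x - C x) = 0.
  rewrite /expect -[fine _]/(\int[P]_x (T x - C x)).
  by rewrite RintegralB //; [rewrite (hCT _ GT) subrr | exact: iT | exact: iC].
by rewrite /Defs.variance E0; congr expect; apply/funext => x; rewrite subr0.
Qed.

End CE.

Definition genS {d} {Omega : measurableType d} {n : nat} {dX : 'I_n -> measure_display}
  {Xsp : forall i, measurableType (dX i)} (X : forall i, Omega -> Xsp i)
  (S : {set 'I_n}) : set (set Omega) :=
  [set A | exists s, s \in S /\
        exists B : set (Xsp s), measurable B /\ A = X s @^-1` B].

Theorem proposition1
  (d : measure_display) (Omega : measurableType d) (R : realType)
  (P : probability Omega R)
  (n : nat) (dX : 'I_n -> measure_display)
  (Xsp : forall i, measurableType (dX i))
  (X : forall i, Omega -> Xsp i)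
  (T : Omega -> R)
  (F : Omega -> R)          (* the random variable f(X) *)
  (V : {set 'I_n} -> Omega -> R)  (* V S = v_{f(X)}(S) = E[f(X) | X_S] *)
  (C : {set 'I_n} -> Omega -> R)  (* C S = E[T | X_S] *)
  (pi : {perm 'I_n}) (j : 'I_n) :
  (forall i, measurable_fun setT (X i)) ->
  measurable_fun setT T ->
  P.-integrable setT (fun x => (T x ^+ 2)%:E) ->
  is_condexp P (sigmaX X [set: 'I_n]) T F ->
  (forall S, is_condexp P (sigmaX X S) F (V S)) ->
  (forall S, is_condexp P (sigmaX X S) T (C S)) ->
  let Rj : {set 'I_n} := [set i : 'I_n | (pi i < pi j)%N]%SET in
  let phi := fun x => (T x - V (j |: Rj) x) ^+ 2 - (T x - V Rj x) ^+ 2 in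
  let L := fun S => LT P T (C S) in
  let W := fun A B => L (A :|: B) - L A - L B in
  - expect P phi = L [set j]%SET + W [set j]%SET Rj.
Proof.
move=> mX mT iT2 hF hV hC Rj phi L W.
have genM S : genS X S `<=` measurable.
  move=> A [s [_ [B [mB ->]]]].
  by have := mX s measurableT B mB; rewrite setTI.
have iTT : P.-integrable setT (EFin \o T) by apply: iT.
have hV' S : is_condexp P (sigmaX X S) T (V S).
  case: (hV S) => w i h; split => // A GA.
  rewrite h //; case: hF => _ _ -> //.
  apply: (sub_sigma_algebra2 (G := genS X [set: 'I_n]%SET) _ GA).
  by move=> B [s [_ hB]]; exists s; split => //; rewrite inE.
have ae S : {ae P, forall x, V S x = C S x}.
  exact: (@condexp_ae _ _ _ P _ (genM S) _ _ _ iTT (hV' S) (hC S)).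
have mV S : measurable_fun setT (V S).
  by case: (hV S) => _ /measurable_int/measurable_EFinP.
have mC S : measurable_fun setT (C S).
  by case: (hC S) => _ /measurable_int/measurable_EFinP.
set J := j |: Rj.
pose psi := fun x => (T x - C J x) ^+ 2 - (T x - C Rj x) ^+ 2.
have ephi : expect P phi = expect P psi.
  rewrite /expect; congr fine.
  apply: (ae_eq_integral (EFin \o psi)) => //.
  - apply/measurable_EFinP; apply: measurable_funB; apply: measurable_funX;
      exact: measurable_funB.
  - apply/measurable_EFinP; apply: measurable_funB; apply: measurable_funX;
      exact: measurable_funB.
  - apply: filterS2 (ae J) (ae Rj) => x h1 h2 _.
    by rewrite /= /phi /psi h1 h2.
have epsi : expect P psi = expect P (fun x => (T x - C J x) ^+ 2)
    - expect P (fun x => (T x - C Rj x) ^+ 2).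
  by apply: RintegralB => //; exact: (@iTC2 _ _ _ P _ (genM _) _ _ mT iT2 (hC _)).
rewrite ephi epsi /W /L /LT.
rewrite (@var_eq _ _ _ P _ _ _ mT iT2 (hC J)) (@var_eq _ _ _ P _ _ _ mT iT2 (hC Rj)).
rewrite -/J.
ring.
Qed.
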